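(* Let $\sigma$ be a partial action of a locally compact Hausdorff group $G$ on a locally compact Hausdorff space $X$. Consider the conditions: (P1) for every pair of compact sets $L,M\subseteq X$, the set $((L,M)):=\{t\in G:\sigma_t(L\cap X_{t^{-1}})\cap M\neq\emptyset\}$ has compact closure; (P2) for every pair of compact sets $L,M\subseteq X$, the set $((L,M))$ is compact; (P3) the map $F_\sigma\colon\Gamma_\sigma\to X\times X$, $(t,x)\mapsto(\sigma_t(x),x)$, is proper. Then (P3)$\Rightarrow$(P2)$\Rightarrow$(P1), but none of the converse implications holds in general.
   Context: A topological partial action $\sigma=(\{X_t\}_{t\in G},\{\sigma_t\}_{t\in G})$ of $G$ on $X$: open sets $X_t\subseteq X$ and homeomorphisms $\sigma_t\colon X_{t^{-1}}\to X_t$ with $X_e=X$, $\sigma_e=\mathrm{id}$, $\sigma_s(X_{s^{-1}}\cap X_t)=X_s\cap X_{st}$, $\sigma_s\sigma_t=\sigma_{st}$ on $X_{t^{-1}}\cap X_{t^{-1}s^{-1}}$, such that $\Gamma_\sigma:=\{(t,x)\in G\times X:x\in X_{t^{-1}}\}$ is open in $G\times X$ and $(t,x)\mapsto\sigma_t(x)$ is continuous on $\Gamma_\sigma$. A map is proper if preimages of compact sets are compact. *)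

(* Defs.v *)
From HB Require Import structures.
From mathcomp Require Import all_boot all_order all_algebra.
From mathcomp Require Import all_classical all_reals all_analysis.
Set Implicit Arguments. Unset Strict Implicit. Unset Printing Implicit Defensive.
Local Open Scope classical_set_scope.

Record topGroup := TopGroup {
  tg_carrier :> topologicalType;
  tg_mul : tg_carrier -> tg_carrier -> tg_carrier;
  tg_inv : tg_carrier -> tg_carrier;
  tg_one : tg_carrier;
  tg_mulA : forall x y z, tg_mul x (tg_mul y z) = tg_mul (tg_mul x y) z;
  tg_mul1g : forall x, tg_mul tg_one x = x;
  tg_mulg1 : forall x, tg_mul x tg_one = x;
  tg_mulVg : forall x, tg_mul (tg_inv x) x = tg_one;
  tg_mulgV : forall x, tg_mul x (tg_inv x) = tg_one;
  tg_mul_cont : continuous (fun p : tg_carrier * tg_carrier => tg_mul p.1 p.2);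
  tg_inv_cont : continuous tg_inv
}.

Definition homeo_on (X : topologicalType) (A B : set X) (f : X -> X) :=
  set_bij A B f /\ {within A, continuous f} /\
  exists g : X -> X, set_bij B A g /\ {within B, continuous g} /\
    (forall x, A x -> g (f x) = x) /\ (forall y, B y -> f (g y) = y).

(* Topological partial action of G on X: domains dom t = X_t, maps act t = sigma_t
   (total functions, only meaningful on X_{t^{-1}}). *)
Record partial_action (G : topGroup) (X : topologicalType) := PartialAction {
  pa_dom : G -> set X;
  pa_act : G -> X -> X;
  pa_dom_open : forall t, open (pa_dom t);
  pa_homeo : forall t, homeo_on (pa_dom (tg_inv t)) (pa_dom t) (pa_act t);
  pa_dom_one : pa_dom (tg_one G) = setT;
  pa_act_one : forall x, pa_act (tg_one G) x = x;
  pa_dom_comp : forall s t,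
    pa_act s @` (pa_dom (tg_inv s) `&` pa_dom t) = pa_dom s `&` pa_dom (tg_mul s t);
  pa_act_comp : forall s t x,
    pa_dom (tg_inv t) x -> pa_dom (tg_inv (tg_mul s t)) x ->
    pa_act s (pa_act t x) = pa_act (tg_mul s t) x;
  pa_Gamma_open : open [set p : G * X | pa_dom (tg_inv p.1) p.2];
  pa_Gamma_cont : {within [set p : G * X | pa_dom (tg_inv p.1) p.2],
                    continuous (fun p : G * X => pa_act p.1 p.2)}
}.

Section PA.
Variables (G : topGroup) (X : topologicalType) (sigma : partial_action G X).

Definition Gamma : set (G * X) := [set p | pa_dom sigma (tg_inv p.1) p.2].

Definition Fsigma (p : G * X) : X * X := (pa_act sigma p.1 p.2, p.2).

Definition return_set (L M : set X) : set G :=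
  [set t | exists x, [/\ L x, pa_dom sigma (tg_inv t) x & M (pa_act sigma t x)]].

Definition P1 := forall L M : set X, compact L -> compact M ->
  compact (closure (return_set L M)).
Definition P2 := forall L M : set X, compact L -> compact M ->
  compact (return_set L M).
Definition P3 := forall K : set (X * X), compact K ->
  compact (Gamma `&` Fsigma @^-1` K).
End PA.

Definition LCH (T : topologicalType) := locally_compact [set: T] /\ hausdorff_space T.

(* Main.v *)
Require Import Defs.
From HB Require Import structures.
From mathcomp Require Import all_boot all_order all_algebra.
From mathcomp Require Import all_classical all_reals all_analysis.
From mathcomp Require Import ring lra.
From mathcomp Require Import Rstruct.
Set Implicit Arguments. Unset Strict Implicit. Unset Printing Implicit Defensive.
Import Order.TTheory GRing.Theory Num.Theory.
Import numFieldNormedType.Exports.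
Local Open Scope classical_set_scope.
Local Open Scope ring_scope.

Lemma fst_cont (U V : topologicalType) : continuous (@fst U V).
Proof. by move=> x; exact: cvg_fst. Qed.
Lemma snd_cont (U V : topologicalType) : continuous (@snd U V).
Proof. by move=> x; exact: cvg_snd. Qed.

Lemma part1 (G : topGroup) (X : topologicalType) (sigma : partial_action G X) :
  P3 sigma -> P2 sigma.
Proof.
move=> H L M cL cM.
have -> : return_set sigma L M = fst @` (Gamma sigma `&` Fsigma sigma @^-1` (M `*` L)).
  rewrite eqEsubset; split => [t [x [Lx Dx Mx]]|_ [[t x] [Gx [/= Mx Lx]] <-]].
    by exists (t, x).
  by exists x.
apply: continuous_compact; first exact/continuous_subspaceT/fst_cont.
by apply: H; exact: compact_setX.
Qed.

Lemma part2 (G : topGroup) (X : topologicalType) (sigma : partial_action G X) :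
  LCH G -> P2 sigma -> P1 sigma.
Proof.
move=> [_ hG] H L M cL cM.
have c := H L M cL cM.
have cl : closed (return_set sigma L M) by exact: compact_closed.
by rewrite -(closure_id _).1.
Qed.

Lemma homeo_intro (X : topologicalType) (A B : set X) (f g : X -> X) :
  (forall x, A x -> B (f x)) -> (forall y, B y -> A (g y)) ->
  {within A, continuous f} -> {within B, continuous g} ->
  (forall x, A x -> g (f x) = x) -> (forall y, B y -> f (g y) = y) ->
  homeo_on A B f.
Proof.
move=> fAB gBA cf cg gf fg.
have bij : forall (A B : set X) (f g : X -> X), (forall x, A x -> B (f x)) ->
    (forall y, B y -> A (g y)) -> (forall x, A x -> g (f x) = x) ->
    (forall y, B y -> f (g y) = y) -> set_bij A B f.
  move=> A' B' f' g' h1 h2 h3 h4; split.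
  - by move=> x Ax; exact: h1.
  - by move=> x y /set_mem Ax /set_mem Ay e; rewrite -(h3 x Ax) -(h3 y Ay) e.
  - by move=> y By; exists (g' y); [exact: h2 | exact: h4].
split; first exact: bij gBA gf fg.
split => //; exists g; split; first exact: bij fAB fg gf.
by [].
Qed.

Lemma bool_prod_cont (T : topologicalType) (f : bool * bool -> T) : continuous f.
Proof.
move=> [a b] U /= Ufp.
exists ([set a], [set b]); first by split; exact: discrete_set1.
by move=> [c d] [/= -> ->]; exact: nbhs_singleton.
Qed.

Definition Gbool : topGroup :=
  @TopGroup bool addb id false
   (fun x y z => addbA x y z) addFb addbF addbb addbb
   (@bool_prod_cont bool (fun p => addb p.1 p.2)) (fun x => cvg_id).

Section BoolEx.
Variable R : realType.

Definition bdom (t : Gbool) : set R := if t then [set x | 0 < x] else setT.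

Lemma bdom_open t : open (bdom t).
Proof. by case: t; [exact: open_gt | exact: openT]. Qed.

Lemma bool_open_prod (D : bool -> set R) : (forall t, open (D t)) ->
  open [set p : Gbool * R | D p.1 p.2].
Proof.
move=> oD; rewrite openE => -[t x] /= Dx.
exists ([set t], D t) => /=.
  split; first exact: discrete_set1.
  by apply: open_nbhs_nbhs; split.
idtac.

by move=> [c d] [/= -> ?].
Qed.

Definition bsigma : partial_action Gbool R.
refine (@PartialAction Gbool R bdom (fun _ x => x) bdom_open _ erefl (fun _ => erefl) _ _ _ _).
- move=> t; apply: homeo_intro; [exact: (fun y h => h)|exact: (fun y h => h)| | |by []|by []];
  exact: (@continuous_subspaceT R R _ id (fun x => cvg_id)).
- by move=> [] [] /=; rewrite image_id ?setIT ?setTI ?setIid.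
- by [].
- exact: bool_open_prod bdom_open.
- exact/continuous_subspaceT/snd_cont.
Defined.

Lemma bool_LCH : LCH Gbool.
Proof.
split; last exact: discrete_hausdorff.
move=> x _; exists [set x]; first by rewrite withinET; exact: discrete_set1.
by split; [exact: compact_set1 | exact: discrete_closed].
Qed.

Lemma R_LCH : LCH R.
Proof. by split; [exact: locally_compactR | exact: Rhausdorff]. Qed.

Lemma bool_P2 : P2 bsigma.
Proof.
move=> L M _ _; apply: (subclosed_compact (discrete_closed _) bool_compact) => //.
Qed.

Lemma bool_notP3 : ~ P3 bsigma.
Proof.
move=> H.
pose K : set (R * R) := `[0, 1] `*` `[0, 1].
have cK : compact K by apply: compact_setX; exact: segment_compact.
have := H K cK.
set S := (Gamma _ `&` _) => cS.
have cS' : compact (S `&` fst @^-1` [set true]).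
  apply: compact_closedI => //; apply: preimage_closed; last exact: discrete_closed.
  by move=> p _; exact: fst_cont.
have cI : compact (snd @` (S `&` fst @^-1` [set true])).
  apply: continuous_compact => //; exact/continuous_subspaceT/snd_cont.
have E : snd @` (S `&` fst @^-1` [set true]) = `]0, 1]%classic.
  rewrite eqEsubset; split.
    move=> _ [[t x] [[Dx [Kx _]] /= tt] <-]; subst t.
    move: Kx; rewrite /= in_itv /= => /andP[_ x1].
    by rewrite in_itv /= x1 andbT; exact: Dx.
  move=> x /=; rewrite in_itv /= => /andP[x0 x1].
  exists (true, x) => //; split => //; split => //=.
  by rewrite /Fsigma /= /K /=; rewrite !in_itv /= (ltW x0) x1.
rewrite E in cI.
have cl := compact_closed (@Rhausdorff R) cI.
have : closure (`]0, 1]%classic : set R) 0.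
  move=> B /nbhs_ballP [e e0 sB].
  exists (Num.min (e / 2) 1); split.
    rewrite /= in_itv /= ge_min lexx orbT andbT lt_min divr_gt0 //=.
  have mp : 0 < Num.min (e/2) 1 by rewrite lt_min ltr01 andbT divr_gt0.
  apply: sB; rewrite /ball /= sub0r normrN gtr0_norm //.
  rewrite gt_min; apply/orP; left.
  by rewrite ltr_pdivrMr // ltr_pMr // ltr1n.
rewrite -(closure_id _).1 //= in_itv /= ltxx //.
Qed.
End BoolEx.

Section REx.
Variable R : realType.

Definition GR : topGroup :=
  @TopGroup R +%R -%R 0 (@addrA R) (@add0r R) (@addr0 R) (@addNr R) (@subrr R)
   add_continuous opp_continuous.

Lemma same_sign (a b c : R) : 0 < a * b -> 0 < a * c -> 0 < b * c.
Proof. move=> h1 h2. nra. Qed.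

Definition Ab (p : R * R) := (p.1 != 0) || (p.2 != 0).
Definition Db (t : R) (p : R * R) := (p.2 != 0) || (0 < p.1 * (p.1 - t)).
Definition shift (t : R) (p : R * R) : R * R := (p.1 + t, p.2).

Lemma Db_A t p : Db t p -> Ab p.
Proof.
rewrite /Db /Ab => /orP[->|h]; first by rewrite orbT.
apply/orP; left; apply/eqP => e; move: h; by rewrite e mul0r ltxx.
Qed.

Lemma Db0 p : Ab p -> Db 0 p.
Proof.
rewrite /Db /Ab subr0 => /orP[h|->]; last by [].
apply/orP; right; case/lt_total/orP: h => h; nra.
Qed.

Lemma Dshift t p : Db (- t) p -> Db t (shift t p).
Proof.
rewrite /Db /shift /= => /orP[->//|h]; apply/orP; right.
by rewrite addrK mulrC -(opprK t).
Qed.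

Lemma shiftK t p : shift (- t) (shift t p) = p.
Proof. by case: p => a b; rewrite /shift /= addrK. Qed.

Lemma shiftNK t p : shift t (shift (- t) p) = p.
Proof. by case: p => a b; rewrite /shift /= subrK. Qed.

Lemma shiftD s t p : shift s (shift t p) = shift (s + t) p.
Proof. by case: p => a b; rewrite /shift /=; congr (_, _); ring. Qed.

Lemma shift0 p : shift 0 p = p.
Proof. by case: p => a b; rewrite /shift /= addr0. Qed.


Definition Aset : set (R * R) := [set p | Ab p].
Definition XR := set_type Aset.


Lemma open_neq0 : open [set x : R | x != 0].
Proof.
have -> : [set x : R | x != 0] = [set x | x < 0] `|` [set x | 0 < x].
  apply/seteqP; split => x /=; first by rewrite neq_lt => /orP.
  by case=> h; [rewrite lt_eqF | rewrite gt_eqF].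
by apply: openU; [exact: open_lt | exact: open_gt].
Qed.

Lemma open_pre (T : topologicalType) (f : T -> R) (D : set R) :
  continuous f -> open D -> open (f @^-1` D).
Proof. by move=> cf oD; apply: open_comp => // x _; exact: cf. Qed.

Lemma Aset_open : open Aset.
Proof.
have -> : Aset = (@fst R R) @^-1` [set x | x != 0] `|` (@snd R R) @^-1` [set x | x != 0].
  apply/seteqP; split => p /=; rewrite /Ab; first by move/orP.
  by case=> h; apply/orP; [left|right].
apply: openU; apply: open_pre open_neq0; [exact: fst_cont | exact: snd_cont].
Qed.

Lemma Dset_open t : open [set p : R * R | Db t p].
Proof.
have -> : [set p : R * R | Db t p] = (@snd R R) @^-1` [set x | x != 0] `|`
    (fun p : R * R => p.1 * (p.1 - t)) @^-1` [set x | 0 < x].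
  apply/seteqP; split => p /=; rewrite /Db; first by move/orP.
  by case=> h; apply/orP; [left|right].
apply: openU; first by apply: open_pre open_neq0; exact: snd_cont.
apply: (@open_pre _ _ [set x : R | 0 < x]); last exact: open_gt.
move=> p.
apply: (@continuousM _ _ (fun p : R * R => p.1) (fun p : R * R => p.1 - t)).
  exact: fst_cont.
apply: (@continuousB _ _ _ (fun p : R * R => p.1) (fun=> t)); first exact: fst_cont.
exact: cvg_cst.
Qed.

Lemma cont_X (Z : topologicalType) (f : Z -> XR) (z : Z) (N : set Z)
  (phi : Z -> R * R) : nbhs z N -> {for z, continuous phi} ->
  (forall w, N w -> \val (f w) = phi w) -> {for z, continuous f}.
Proof.
move=> Nz cphi fe U /=; rewrite nbhsE => -[V [oV Vz] VU].
case: oV => O oO eO.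
have Oz : O (phi z).
  rewrite -(fe z (nbhs_singleton Nz)); rewrite -eO in Vz; exact: Vz.
have hO : nbhs z (phi @^-1` O) by apply: cphi; apply: open_nbhs_nbhs.
apply: filterS (filterI Nz hO) => w [Nw Ow]; apply: VU; rewrite -eO.
by change (O (\val (f w))); rewrite fe.
Qed.

Lemma val_cont : continuous (\val : XR -> R * R).
Proof. exact: initial_continuous. Qed.

Lemma openX (O : set (R * R)) : open O -> open [set q : XR | O (\val q)].
Proof. by move=> oO; exists O. Qed.

Lemma pair_cont (Z : topologicalType) (f g : Z -> R) z :
  {for z, continuous f} -> {for z, continuous g} ->
  {for z, continuous (fun w => (f w, g w))}.
Proof.
move=> cf cg U /= [[P Q] [/= nP nQ] sPQ].
have h1 : nbhs z (f @^-1` P) := cf P nP.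
have h2 : nbhs z (g @^-1` Q) := cg Q nQ.
change (nbhs z ((fun w => (f w, g w)) @^-1` U)).
apply: (filterS _ (filterI h1 h2)) => w [Pw Qw].
by apply: sPQ; split.
Qed.

Lemma shift_cont t : continuous (shift t).
Proof.
move=> p; apply: (@pair_cont _ (fun x : R * R => x.1 + t) (fun x => x.2)); last exact: snd_cont.
by apply: (@continuousD _ _ _ (fun x : R * R => x.1) (fun=> t)); [exact: fst_cont | exact: cvg_cst].
Qed.

Definition rdom (t : GR) : set XR := [set q | Db t (\val q)].
Definition ract (t : GR) (q : XR) : XR := insubd q (shift t (\val q)).

Lemma rdom_open t : open (rdom t).
Proof. exact: (openX (@Dset_open t)). Qed.

Lemma valact (t : R) q : Db (- t) (\val q) -> \val (ract t q) = shift t (\val q).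
Proof.
move=> D; rewrite /ract insubdK //.
by rewrite inE; apply: Db_A (Dshift D).
Qed.

Lemma Db_comp1 (s t : R) p : Db (- s) p -> Db t p -> Db (s + t) (shift s p).
Proof.
case: p => a b; rewrite /Db /shift /=; case: (eqVneq b 0) => _ //= h1 h2.
have := same_sign h1 h2.
by have -> : (a + s) * (a + s - (s + t)) = (a - - s) * (a - t) by ring.
Qed.

Lemma Db_comp2 (s t : R) p : Db s p -> Db (s + t) p -> Db t (shift (- s) p).
Proof.
case: p => a b; rewrite /Db /shift /=; case: (eqVneq b 0) => _ //= h1 h2.
have := same_sign h1 h2.
by have -> : (a + - s) * (a + - s - t) = (a - s) * (a - (s + t)) by ring.
Qed.

Lemma Db_comp3 (s t : R) p : Db (- t) p -> Db (- (s + t)) p -> Db (- s) (shift t p).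
Proof.
case: p => a b; rewrite /Db /shift /=; case: (eqVneq b 0) => _ //= h1 h2.
have := same_sign h1 h2.
by have -> : (a + t) * (a + t - - s) = (a - - t) * (a - - (s + t)) by ring.
Qed.

Lemma ract_cont (t : R) : {within rdom (- t), continuous (ract t)}.
Proof.
rewrite continuous_open_subspace; last exact: rdom_open.
move=> q /set_mem Dq.
apply: (@cont_X _ _ q (rdom (- t)) (fun w => shift t (\val w))).
- by apply: open_nbhs_nbhs; split => //; exact: rdom_open.
- by apply: continuous_comp; [exact: val_cont | exact: shift_cont].
- by move=> w Dw; exact: valact.
Qed.

Lemma ract_homeo (t : GR) : homeo_on (rdom (tg_inv t)) (rdom t) (ract t).
Proof.
have Dn : forall (t : R) q, rdom t q -> Db (- - t) (\val q).
  by move=> t' q; rewrite opprK.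
apply: (@homeo_intro _ _ _ _ (ract (- t))).
- by move=> x Dx; rewrite /rdom /= valact //; exact: Dshift.
- by move=> y Dy; rewrite /rdom /= valact; [apply: Dshift; exact: Dn | exact: Dn].
- exact: ract_cont.
- by have := @ract_cont (- t); rewrite opprK.
- move=> x Dx; apply: val_inj; rewrite valact; first by rewrite (valact Dx) shiftK.
  by rewrite opprK (valact Dx); exact: Dshift.
- move=> y Dy; apply: val_inj; rewrite valact; first by rewrite (valact (Dn _ _ Dy)) shiftNK.
  by rewrite (valact (Dn _ _ Dy)); apply: Dshift; exact: Dn.
Qed.

Lemma rdom_one : rdom (tg_one GR) = setT.
Proof.
apply/seteqP; split => // q _; rewrite /rdom /=; apply: Db0.
by have := valP q; rewrite inE.
Qed.

Lemma ract_one (q : XR) : ract (tg_one GR) q = q.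
Proof. by rewrite /ract /= shift0 valKd. Qed.

Lemma rdom_comp (s t : GR) :
  ract s @` (rdom (tg_inv s) `&` rdom t) = rdom s `&` rdom (tg_mul s t).
Proof.
apply/seteqP; split.
  move=> _ [q [D1 D2] <-]; split; rewrite /rdom /= valact //.
    exact: Dshift.
  exact: Db_comp1.
move=> q' [D1 D2].
have Dn1 : Db (- - s) (\val q') by rewrite opprK.
have D3 : Db (- s) (\val (ract (- s) q')) by rewrite (valact Dn1); exact: Dshift.
exists (ract (- s) q').
  split => //; rewrite /rdom /= (valact Dn1); exact: Db_comp2.
by apply: val_inj; rewrite (valact D3) (valact Dn1) shiftNK.
Qed.

Lemma ract_comp (s t : GR) (x : XR) :
  rdom (tg_inv t) x -> rdom (tg_inv (tg_mul s t)) x ->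
  ract s (ract t x) = ract (tg_mul s t) x.
Proof.
move=> D1 D2.
have D3 : Db (- s) (\val (ract t x)) by rewrite (valact D1); exact: Db_comp3.
by apply: val_inj; rewrite (valact D3) (valact D1) (valact D2) shiftD.
Qed.

Lemma cv1 : continuous (fun p : GR * XR => (\val p.2).1).
Proof.
move=> p.
have h := continuous_comp (@val_cont p.2) (@fst_cont R R (\val p.2)).
exact: (@continuous_comp _ _ _ (@snd GR XR) (fun q : XR => (\val q).1) p (@snd_cont GR XR p) h).
Qed.

Lemma cv2 : continuous (fun p : GR * XR => (\val p.2).2).
Proof.
move=> p.
have h := continuous_comp (@val_cont p.2) (@snd_cont R R (\val p.2)).
exact: (@continuous_comp _ _ _ (@snd GR XR) (fun q : XR => (\val q).2) p (@snd_cont GR XR p) h).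
Qed.

Lemma rGamma_open : open [set p : GR * XR | rdom (tg_inv p.1) p.2].
Proof.
have -> : [set p : GR * XR | rdom (tg_inv p.1) p.2] =
    (fun p : GR * XR => (\val p.2).2) @^-1` [set x | x != 0] `|`
    (fun p : GR * XR => (\val p.2).1 * ((\val p.2).1 - - p.1)) @^-1` [set x | 0 < x].
  apply/seteqP; split => p /=; rewrite /rdom /Db /=; first by move/orP.
  by case=> h; apply/orP; [left|right].
apply: openU; first by apply: open_pre open_neq0; exact: cv2.
apply: (@open_pre _ _ [set x : R | 0 < x]); last exact: open_gt.
move=> p.
apply: (@continuousM _ _ (fun p : GR * XR => (\val p.2).1) (fun p => (\val p.2).1 - - p.1)).
  exact: cv1.
apply: (@continuousB _ _ _ (fun p : GR * XR => (\val p.2).1) (fun p => - p.1)); first exact: cv1.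
apply: (@continuousN _ _ _ (fun p : GR * XR => p.1)); exact: fst_cont.
Qed.

Lemma rGamma_cont : {within [set p : GR * XR | rdom (tg_inv p.1) p.2],
                    continuous (fun p : GR * XR => ract p.1 p.2)}.
Proof.
rewrite continuous_open_subspace; last exact: rGamma_open.
move=> p /set_mem Gp.
apply: (@cont_X _ _ p [set p : GR * XR | rdom (tg_inv p.1) p.2] (fun w : GR * XR => ((\val w.2).1 + w.1, (\val w.2).2))).
- by apply: open_nbhs_nbhs; split => //; exact: rGamma_open.
- apply: (@pair_cont _ (fun w : GR * XR => (\val w.2).1 + w.1) (fun w => (\val w.2).2)); last exact: cv2.
  apply: (@continuousD _ _ _ (fun w : GR * XR => (\val w.2).1) (fun w => w.1)); first exact: cv1.
  exact: fst_cont.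
- by move=> w Gw; rewrite (valact Gw).
Qed.

Definition rsigma : partial_action GR XR :=
  @PartialAction GR XR rdom ract rdom_open ract_homeo rdom_one ract_one
    rdom_comp ract_comp rGamma_open rGamma_cont.

Lemma cluster_cont (T U : topologicalType) (c : T -> U) p q :
  continuous c -> cluster (nbhs p) q -> cluster (nbhs (c p)) (c q).
Proof.
move=> cc cl A B nA nB.
have [w [Aw Bw]] := cl _ _ (cc p A nA) (cc q B nB).
by exists (c w).
Qed.

Lemma cx1 : continuous (fun q : XR => (\val q).1).
Proof. by move=> q; exact: (continuous_comp (@val_cont q) (@fst_cont R R (\val q))). Qed.
Lemma cx2 : continuous (fun q : XR => (\val q).2).
Proof. by move=> q; exact: (continuous_comp (@val_cont q) (@snd_cont R R (\val q))). Qed.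

Lemma XR_hausdorff : hausdorff_space XR.
Proof.
move=> p q cl; apply: val_inj.
have e1 := Rhausdorff (cluster_cont cx1 cl).
have e2 := Rhausdorff (cluster_cont cx2 cl).
move: e1 e2; case: (\val p) => a b; case: (\val q) => c d /= -> ->.
by [].
Qed.

Lemma half_nz (a y r : R) : a != 0 -> r = `|a| / 2 ->
  y \in `[a - r, a + r] -> y != 0.
Proof.
move=> a0 -> ; rewrite in_itv /= => /andP[h1 h2]; apply/eqP => y0; subst y.
case: (ltgtP a 0) a0 => // ha _.
  by move: h1 h2; rewrite ltr0_norm //; lra.
by move: h1 h2; rewrite gtr0_norm //; lra.
Qed.

Lemma box_in (v : R * R) : Ab v -> exists2 r : R, 0 < r &
  forall p : R * R, p.1 \in `[v.1 - r, v.1 + r] -> p.2 \in `[v.2 - r, v.2 + r] -> Ab p.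
Proof.
rewrite /Ab; case: (eqVneq v.1 0) => [e1|n1] /=.
  move=> n2; exists (`|v.2| / 2); first by rewrite divr_gt0 // normr_gt0.
  by move=> p _ h; apply/orP; right; exact: (half_nz n2 erefl h).
move=> _; exists (`|v.1| / 2); first by rewrite divr_gt0 // normr_gt0.
by move=> p h _; apply/orP; left; exact: (half_nz n1 erefl h).
Qed.

Lemma itv_nbhs (a r : R) : 0 < r -> nbhs a `[a - r, a + r]%classic.
Proof.
move=> r0; apply: (@filterS _ _ _ (ball a r)); last exact: nbhsx_ballx.
move=> y.
rewrite ball_itv /= !in_itv /= => /andP[h1 h2].
by rewrite (ltW h1) (ltW h2).
Qed.

Lemma insubd_cont (x0 : XR) (p : R * R) : Aset p -> {for p, continuous (insubd x0 : R * R -> XR)}.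
Proof.
move=> Ap; apply: (@cont_X _ _ p Aset id).
- by apply: open_nbhs_nbhs; split => //; exact: Aset_open.
- exact: cvg_id.
- by move=> w Aw; rewrite insubdK // inE.
Qed.

Lemma XR_lc : locally_compact [set: XR].
Proof.
move=> x _; rewrite withinET.
have [r r0 hr] := box_in (set_mem (valP x)).
pose B := `[(\val x).1 - r, (\val x).1 + r]%classic `*` `[(\val x).2 - r, (\val x).2 + r]%classic.
have BA : B `<=` Aset by move=> p [h1 h2]; exact: hr.
exists [set q : XR | B (\val q)].
  apply: (@val_cont x); exists (`[(\val x).1 - r, (\val x).1 + r]%classic, `[(\val x).2 - r, (\val x).2 + r]%classic).
    by split; exact: itv_nbhs.
  by [].
have cU : compact [set q : XR | B (\val q)].
  have -> : [set q : XR | B (\val q)] = insubd x @` B.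
    apply/seteqP; split => q.
      by move=> Bq; exists (\val q) => //; rewrite valKd.
    by move=> [p Bp <-] /=; rewrite insubdK // inE; exact: BA.
  apply: continuous_compact; last by apply: compact_setX; exact: segment_compact.
  apply: (continuous_subspaceW BA).
  rewrite continuous_open_subspace; last exact: Aset_open.
  by move=> p /set_mem Ap; exact: insubd_cont.
by split => //; exact: compact_closed XR_hausdorff cU.
Qed.

Lemma rP1 : P1 rsigma.
Proof.
move=> L M cL cM.
pose d := fun r : XR * XR => (\val r.1).1 - (\val r.2).1.
have cd : continuous d.
  move=> r; apply: (@continuousB _ _ _ (fun r : XR * XR => (\val r.1).1) (fun r : XR * XR => (\val r.2).1)).
    exact: (continuous_comp (@fst_cont XR XR r) (@cx1 r.1)).
  exact: (continuous_comp (@snd_cont XR XR r) (@cx1 r.2)).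
have cK : compact (d @` (M `*` L)).
  apply: continuous_compact; first exact: continuous_subspaceT.
  exact: compact_setX.
have clK : closed (d @` (M `*` L)) by exact: compact_closed (@Rhausdorff R) cK.
have sub : return_set rsigma L M `<=` d @` (M `*` L).
  move=> t [x [Lx Dx Mx]]; exists (ract t x, x) => //.
  by rewrite /d /= (valact Dx) /shift /= addrC addKr.
apply: (subclosed_compact (@closed_closure _ _) cK).
by rewrite [X in _ `<=` X](closure_id _).1 //; exact: closure_subset.
Qed.

Lemma A10 : ((1 : R), (0 : R)) \in Aset.
Proof. by rewrite inE /Ab /=; apply/orP; left; exact: oner_neq0. Qed.

Definition x0 : XR := exist _ ((1 : R), (0 : R)) A10.
Definition h1 (y : R) : XR := insubd x0 ((-1, y) : R * R).
Definition h2 (y : R) : XR := insubd x0 ((2 + y, y) : R * R).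

Lemma val_h1 y : \val (h1 y) = (-1, y).
Proof. by rewrite /h1 insubdK // inE /Ab /=; apply/orP; left; rewrite oppr_eq0; exact: oner_neq0. Qed.

Lemma val_h2 y : \val (h2 y) = (2 + y, y).
Proof.
rewrite /h2 insubdK // inE /Ab /=; apply/orP.
case: (eqVneq y 0) => [->|h]; last by right.
by left; rewrite addr0 pnatr_eq0.
Qed.

Lemma h1_cont : continuous h1.
Proof.
move=> y; apply: (@cont_X _ _ y setT (fun y => ((-1 : R), y))) => //.
- exact: filterT.
- by apply: (@pair_cont _ (fun=> -1) id); [exact: cvg_cst | exact: cvg_id].
- by move=> w _; exact: val_h1.
Qed.

Lemma h2_cont : continuous h2.
Proof.
move=> y; apply: (@cont_X _ _ y setT (fun y => (2 + y, y))) => //.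
- exact: filterT.
- apply: pair_cont; last exact: cvg_id.
  by apply: cvgD; [exact: cvg_cst | exact: cvg_id].
- by move=> w _; exact: val_h2.
Qed.

Lemma rnotP2 : ~ P2 rsigma.
Proof.
pose L := h1 @` `[0, 1]%classic.
pose M := h2 @` `[0, 1]%classic.
have cL : compact L.
  by apply: continuous_compact; [exact: continuous_subspaceT h1_cont | exact: segment_compact].
have cM : compact M.
  by apply: continuous_compact; [exact: continuous_subspaceT h2_cont | exact: segment_compact].
move=> H; have cRS := H L M cL cM.
have clRS := compact_closed (@Rhausdorff R) cRS.
have not3 : ~ return_set rsigma L M 3.
  move=> [x [[y y01 <-] Dx [y' y'01 e]]].
  have := congr1 \val e; rewrite (valact Dx) val_h1 val_h2 /shift /= => -[e1 e2].
  move: Dx; rewrite /= /rdom /= val_h1 /Db /=.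
  subst y'; have y0 : y = 0 by lra.
  subst y.
  rewrite eqxx /=; lra.
apply: not3; rewrite ((closure_id _).1 clRS).
move=> B /nbhs_ballP [e e0 sB].
have mp : 0 < Num.min (e / 2) 1 by rewrite lt_min ltr01 andbT divr_gt0.
have m1 : Num.min (e / 2) 1 <= 1 by rewrite ge_min lexx orbT.
have me : Num.min (e / 2) 1 < e.
  by rewrite gt_min; apply/orP; left; rewrite ltr_pdivrMr // ltr_pMr // ltr1n.
set m := Num.min (e / 2) 1 in mp m1 me.
exists (3 + m); split.
  have Dx : Db (- (3 + m)) (\val (h1 m)) by rewrite val_h1 /Db /= gt_eqF.
  exists (h1 m); split => //.
    by exists m => //; rewrite /= in_itv /= (ltW mp) m1.
  exists m; first by rewrite /= in_itv /= (ltW mp) m1.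
  apply: val_inj; rewrite /= (valact Dx) val_h1 val_h2 /shift /=.
  by congr (_, _); ring.
apply: sB; rewrite /ball /= opprD addrA subrr sub0r normrN gtr0_norm //.
Qed.

End REx.

Theorem proposition1p3 :
  (forall (G : topGroup) (X : topologicalType) (sigma : partial_action G X),
     LCH G -> LCH X -> P3 sigma -> P2 sigma) /\
  (forall (G : topGroup) (X : topologicalType) (sigma : partial_action G X),
     LCH G -> LCH X -> P2 sigma -> P1 sigma) /\
  (exists (G : topGroup) (X : topologicalType) (sigma : partial_action G X),
     [/\ LCH G, LCH X, P2 sigma & ~ P3 sigma]) /\
  (exists (G : topGroup) (X : topologicalType) (sigma : partial_action G X),
     [/\ LCH G, LCH X, P1 sigma & ~ P2 sigma]).
Proof.
split; first by move=> G X s _ _; exact: part1.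
split; first by move=> G X s hG _; exact: part2.
split.
  exists Gbool, _, (bsigma Rdefinitions.R); split.
  - exact: bool_LCH.
  - exact: R_LCH.
  - exact: bool_P2.
  - exact: bool_notP3.
exists (GR Rdefinitions.R), _, (rsigma Rdefinitions.R); split.
- exact: (R_LCH Rdefinitions.R).
- by split; [exact: XR_lc | exact: XR_hausdorff].
- exact: rP1.
- exact: rnotP2.
Qed.
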